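(* Let $G$ be a simple graph on $n$ vertices with $cM_2(G)\ge cM_2(H)$ for every simple graph $H$ on $n$ vertices, and let $F$, $X$ be as defined in the context. If $u,v\in X$ are distinct and $uv\notin E(G)$, then $d_G(u)=d_G(v)$, and $d_G(w)\ne d_G(u)$ for every $w\in X\setminus\{u,v\}$.
   Context: All graphs are finite and simple; $d_G(u)$ is the degree of $u$ and $cM_2(G)=\sum_{uv\in E(G)}|d_G(u)^2-d_G(v)^2|$. The canonical mixed graph $F$ of $G$ has vertex set $V(G)$; for each edge $uv\in E(G)$: if $d_G(u)>d_G(v)$ then $F$ contains the arc $\overrightarrow{uv}$, and if $d_G(u)=d_G(v)$ then $F$ contains the undirected edge $uv$. $d^+_F(u)$ (resp. $d^-_F(u)$) is the number of arcs of $F$ with tail (resp. head) $u$. $X=\{u\in V(G): d^+_F(u)\ge d^-_F(u)\}$ and $Y=\{u\in V(G): d^+_F(u)< d^-_F(u)\}$. *)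

(* Defs.v *)
From mathcomp Require Import all_boot.
Set Implicit Arguments. Unset Strict Implicit. Unset Printing Implicit Defensive.

Definition simple_graph n (e : rel 'I_n) : Prop := symmetric e /\ irreflexive e.

Definition deg n (e : rel 'I_n) (u : 'I_n) : nat := #|[set v | e u v]|.

Definition absdiff (a b : nat) : nat := (a - b) + (b - a).

Definition cM2 n (e : rel 'I_n) : nat :=
  \sum_(u : 'I_n) \sum_(v : 'I_n | (u < v) && e u v)
     absdiff (deg e u ^ 2) (deg e v ^ 2).

(* Canonical mixed graph F: arc u->v iff uv edge and d(u) > d(v). *)
Definition outdegF n (e : rel 'I_n) (u : 'I_n) : nat :=
  #|[set v | e u v && (deg e v < deg e u)]|.
Definition indegF n (e : rel 'I_n) (u : 'I_n) : nat :=
  #|[set v | e u v && (deg e u < deg e v)]|.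

Definition inX n (e : rel 'I_n) (u : 'I_n) : bool := indegF e u <= outdegF e u.

(* Main.v *)
Require Import Defs.
From mathcomp Require Import all_boot zify.
Set Implicit Arguments. Unset Strict Implicit. Unset Printing Implicit Defensive.

Section S.
Variable n : nat.
Implicit Types (e : rel 'I_n) (u v x y : 'I_n).

Definition T e x y : nat := if e x y then absdiff (deg e x ^ 2) (deg e y ^ 2) else 0.

Lemma absdiffC a b : absdiff a b = absdiff b a.
Proof. by rewrite /absdiff addnC. Qed.

Lemma cM2E e : symmetric e -> irreflexive e ->
  cM2 e + cM2 e = \sum_(x : 'I_n) \sum_(y : 'I_n) T e x y.
Proof.
move=> Hs Hi.
have E1 : cM2 e = \sum_(x : 'I_n) \sum_(y : 'I_n) (x < y) * T e x y.
  rewrite /cM2; apply: eq_bigr => x _; rewrite big_mkcondr /= big_mkcond /=. idtac.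
  by apply: eq_bigr => y _; rewrite /T; case: (x < y); case: (e x y); rewrite ?mul1n ?mul0n.
have E2 : \sum_(x : 'I_n) \sum_(y : 'I_n) T e x y =
   \sum_(x : 'I_n) \sum_(y : 'I_n) ((x < y) * T e x y + (y < x) * T e x y).
  apply: eq_bigr => x _; apply: eq_bigr => y _.
  have [xy|yx|/val_inj->] := ltngtP x y; rewrite ?mul1n ?mul0n ?addn0 //.
  by rewrite /T Hi.
rewrite E2; under eq_bigr do rewrite big_split /=.
rewrite big_split /= -E1; congr (_ + _).
rewrite E1 exchange_big /=; apply: eq_bigr => x _; apply: eq_bigr => y _.
by rewrite /T Hs absdiffC.
Qed.

Lemma sum_if_eq (j : 'I_n) (F : 'I_n -> nat) :
  \sum_(y : 'I_n) (if y == j then F y else 0) = F j.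
Proof. by rewrite -big_mkcond big_pred1_eq. Qed.

Lemma sum_if_card (P : pred 'I_n) k :
  \sum_(y : 'I_n) (if P y then k else 0) = #|[set y | P y]| * k.
Proof. by rewrite -big_mkcond sum_nat_const cardsE. Qed.

Definition addE e u v : rel 'I_n :=
  fun x y => e x y || ((x == u) && (y == v)) || ((x == v) && (y == u)).

Lemma degA e u v x : symmetric e -> irreflexive e -> u != v -> ~~ e u v ->
  deg (addE e u v) x = deg e x + (x == u) + (x == v).
Proof.
move=> Hs Hi uv nuv; rewrite /deg.
have [->|xu] := eqVneq x u.
  rewrite (negbTE uv) addn0.
  have -> : [set y | addE e u v u y] = v |: [set y | e u y].
    by apply/setP=> y; rewrite !inE /addE eqxx (negbTE uv) /= orbF orbC.
  by rewrite cardsU1 inE (negbTE nuv) add1n addn1.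
have [->|xv] := eqVneq x v.
  have -> : [set y | addE e u v v y] = u |: [set y | e v y].
    by apply/setP=> y; rewrite !inE /addE eqxx eq_sym (negbTE uv) /= orbF orbC.
  by rewrite cardsU1 inE Hs (negbTE nuv) add1n addn1 addn0.
rewrite /= !addn0; apply: eq_card => y.
by rewrite !inE /addE (negbTE xu) (negbTE xv) /= !orbF.
Qed.

Lemma addE_simple e u v : symmetric e -> irreflexive e -> u != v ->
  simple_graph (addE e u v).
Proof.
move=> Hs Hi uv; split.
  move=> x y; rewrite /addE Hs; case: (e y x) => //=.
  by rewrite orbC andbC [(y == v) && _]andbC.
move=> x; rewrite /addE Hi /=; apply/negP => /orP[] /andP[/eqP-> /eqP uv'];
  by move: uv; rewrite uv' eqxx.
Qed.


Definition php a d := if d <= a then (2 * a).+1 else 0.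
Definition phm a d := if a < d then (2 * a).+1 else 0.

Lemma absdiff_step a d :
  absdiff ((a.+1) ^ 2) (d ^ 2) + phm a d = absdiff (a ^ 2) (d ^ 2) + php a d.
Proof.
rewrite /php /phm /absdiff; case: leqP => h.
  have h2 : d ^ 2 <= a ^ 2 by rewrite leq_exp2r.
  have -> : a.+1 ^ 2 = a ^ 2 + (2 * a).+1 by rewrite -addn1 sqrnD; lia.
  lia.
have h2 : a.+1 ^ 2 <= d ^ 2 by rewrite leq_exp2r.
have -> : a.+1 ^ 2 = a ^ 2 + (2 * a).+1 by rewrite -addn1 sqrnD; lia.
lia.
Qed.

Definition eqF e z := #|[set y | e z y && (deg e y == deg e z)]|.

Lemma PpE e z : \sum_(y : 'I_n) (if e z y then php (deg e z) (deg e y) else 0)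
  = (2 * deg e z).+1 * (outdegF e z + eqF e z).
Proof.
rewrite (eq_bigr (fun y => (if e z y && (deg e y < deg e z) then (2 * deg e z).+1 else 0)
   + (if e z y && (deg e y == deg e z) then (2 * deg e z).+1 else 0))); last first.
  move=> y _; rewrite /php; case: (e z y) => //=.
  by case: ltngtP => _; rewrite ?addn0.
by rewrite /= big_split /= !sum_if_card /outdegF /eqF mulnDr mulnC [_ * #|[set y | _ && (_ == _)]|]mulnC.
Qed.

Lemma PmE e z : \sum_(y : 'I_n) (if e z y then phm (deg e z) (deg e y) else 0)
  = (2 * deg e z).+1 * indegF e z.
Proof.
rewrite /indegF mulnC -sum_if_card; apply: eq_bigr => y _; rewrite /phm.
by case: (e z y).
Qed.

Section Main.
Variables (e : rel 'I_n) (u v : 'I_n).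
Hypotheses (Hs : symmetric e) (Hi : irreflexive e) (uv : u != v) (nuv : ~~ e u v).
Let e' := addE e u v.
Let a := deg e u.
Let b := deg e v.
Let c := absdiff ((a.+1) ^ 2) ((b.+1) ^ 2).

Lemma dAu : deg e' u = a.+1.
Proof. by rewrite /e' degA // eqxx (negbTE uv) addn0 addn1. Qed.
Lemma dAv : deg e' v = b.+1.
Proof. have vu : v != u by rewrite eq_sym. rewrite /e' degA // eqxx (negbTE vu). by rewrite /= addn0 addn1. Qed.
Lemma dAo z : z != u -> z != v -> deg e' z = deg e z.
Proof. by move=> zu zv; rewrite /e' degA // (negbTE zu) (negbTE zv) !addn0. Qed.

Definition Qp x y :=
   (if x == u then (if y == v then c else 0) + (if e u y then php a (deg e y) else 0) else 0)
 + (if x == v then (if y == u then c else 0) + (if e v y then php b (deg e y) else 0) else 0)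
 + (if y == u then (if e x u then php a (deg e x) else 0) else 0)
 + (if y == v then (if e x v then php b (deg e x) else 0) else 0).
Definition Qm x y :=
   (if x == u then (if e u y then phm a (deg e y) else 0) else 0)
 + (if x == v then (if e v y then phm b (deg e y) else 0) else 0)
 + (if y == u then (if e x u then phm a (deg e x) else 0) else 0)
 + (if y == v then (if e x v then phm b (deg e x) else 0) else 0).

Lemma pointwise x y : T e' x y + Qm x y = T e x y + Qp x y.
Proof.
have vu : v != u by rewrite eq_sym.
have nvu : ~~ e v u by rewrite Hs.
have Ee : e' x y = e x y || ((x == u) && (y == v)) || ((x == v) && (y == u)) by [].
rewrite /T /Qm /Qp Ee.
have [->|xu] := eqVneq x u.
  rewrite ?(negbTE uv) /=.
  have [->|yu] := eqVneq y u.
    by rewrite ?Hi ?(negbTE uv) ?(negbTE nuv).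
  have [->|yv] := eqVneq y v.
    rewrite ?(negbTE nuv) ?(negbTE vu) /= dAu dAv /c /a /b; rewrite ?(negbTE uv) /= !addn0 !add0n //.
  rewrite ?(negbTE yu) ?(negbTE yv) /= !orbF.
  case Euy: (e u y) => //=. rewrite dAu dAo // /a. by rewrite !addn0 !add0n; apply: absdiff_step.
have [->|xv] := eqVneq x v.
  rewrite ?(negbTE vu) /=.
  have [->|yu] := eqVneq y u.
    rewrite ?(negbTE nvu) ?(negbTE vu) /= dAu dAv /c /a /b absdiffC; rewrite ?(negbTE uv) /= !addn0 !add0n //.
  have [->|yv] := eqVneq y v.
    by rewrite ?Hi ?(negbTE uv) ?(negbTE nvu).
  rewrite ?(negbTE yu) ?(negbTE yv) /= !orbF.
  case Evy: (e v y) => //=. rewrite dAv dAo // /b. by rewrite !addn0 !add0n; apply: absdiff_step.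
rewrite /= !orbF.
have [->|yu] := eqVneq y u.
  rewrite ?(negbTE uv) /=.
  case Exu: (e x u) => //=. rewrite dAu dAo // /a absdiffC [absdiff (deg e x ^ 2) _]absdiffC.
  by rewrite !addn0 !add0n; apply: absdiff_step.
have [->|yv] := eqVneq y v.
  case Exv: (e x v) => //=. rewrite dAv dAo // /b absdiffC [absdiff (deg e x ^ 2) _]absdiffC.
  by rewrite !addn0 !add0n; apply: absdiff_step.
case: (e x y) => //=. by rewrite !dAo.
Qed.
Definition Pp := \sum_(y : 'I_n) (if e u y then php a (deg e y) else 0).
Definition Ppv := \sum_(y : 'I_n) (if e v y then php b (deg e y) else 0).
Definition Pm := \sum_(y : 'I_n) (if e u y then phm a (deg e y) else 0).
Definition Pmv := \sum_(y : 'I_n) (if e v y then phm b (deg e y) else 0).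

Lemma sumQp : \sum_(x : 'I_n) \sum_(y : 'I_n) Qp x y = (c + Pp) + (c + Ppv) + Pp + Ppv.
Proof.
rewrite /Qp.
under eq_bigr => x _.
  rewrite !big_split /=.
  have -> : \sum_(y : 'I_n) (if x == u then (if y == v then c else 0) + (if e u y then php a (deg e y) else 0) else 0)
     = if x == u then c + Pp else 0.
    case: (x == u); first by rewrite big_split sum_if_eq.
    by rewrite big1.
  have -> : \sum_(y : 'I_n) (if x == v then (if y == u then c else 0) + (if e v y then php b (deg e y) else 0) else 0)
     = if x == v then c + Ppv else 0.
    case: (x == v); first by rewrite big_split sum_if_eq.
    by rewrite big1.
  rewrite !sum_if_eq.
  over.
rewrite !big_split /= !sum_if_eq; congr (_ + _ + _).
  by apply: eq_bigr => x _; rewrite Hs.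
by apply: eq_bigr => x _; rewrite Hs.
Qed.

Lemma sumQm : \sum_(x : 'I_n) \sum_(y : 'I_n) Qm x y = Pm + Pmv + Pm + Pmv.
Proof.
rewrite /Qm.
under eq_bigr => x _.
  rewrite !big_split /=.
  have -> : \sum_(y : 'I_n) (if x == u then (if e u y then phm a (deg e y) else 0) else 0)
     = if x == u then Pm else 0.
    by case: (x == u); last rewrite big1.
  have -> : \sum_(y : 'I_n) (if x == v then (if e v y then phm b (deg e y) else 0) else 0)
     = if x == v then Pmv else 0.
    by case: (x == v); last rewrite big1.
  rewrite !sum_if_eq.
  over.
rewrite !big_split /= !sum_if_eq; congr (_ + _ + _).
  by apply: eq_bigr => x _; rewrite Hs.
by apply: eq_bigr => x _; rewrite Hs.
Qed.

Lemma identity : cM2 e' + cM2 e' + (Pm + Pmv + Pm + Pmv) =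
   cM2 e + cM2 e + ((c + Pp) + (c + Ppv) + Pp + Ppv).
Proof.
have [Hs' Hi'] := addE_simple Hs Hi uv.
rewrite cM2E // cM2E // -sumQp -sumQm -!big_split /=.
apply: eq_bigr => x _; rewrite -!big_split /=.
by apply: eq_bigr => y _; apply: pointwise.
Qed.

End Main.

Section L1.
Lemma L1 e u v : simple_graph e -> (forall h : rel 'I_n, simple_graph h -> cM2 h <= cM2 e) ->
  u != v -> inX e u -> inX e v -> ~~ e u v ->
  [/\ deg e u = deg e v, eqF e u = 0, eqF e v = 0, indegF e u = outdegF e u
    & cM2 (addE e u v) = cM2 e].
Proof.
move=> [Hs Hi] Hmax uv Xu Xv nuv.
have I := identity Hs Hi uv nuv.
have M := Hmax _ (addE_simple Hs Hi uv).
move: I; rewrite /Pp /Ppv /Pm /Pmv !PpE !PmE !mulnDr.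
move: Xu Xv; rewrite /inX => Xu Xv.
set Ka := (2 * deg e u).+1; set Kb := (2 * deg e v).+1.
have Ha : Ka * indegF e u <= Ka * outdegF e u by rewrite leq_mul2l Xu orbT.
have Hb : Kb * indegF e v <= Kb * outdegF e v by rewrite leq_mul2l Xv orbT.
move=> I.
have c0 : absdiff ((deg e u).+1 ^ 2) ((deg e v).+1 ^ 2) = 0 by lia.
have Ea : Ka * eqF e u = 0 by lia.
have Eb : Kb * eqF e v = 0 by lia.
have Ia : Ka * indegF e u = Ka * outdegF e u by lia.
split.
- move: c0; rewrite /absdiff => c0.
  apply/eqP; rewrite -eqSS eqn_leq -(leq_exp2r _ _ (isT : 0 < 2)) -[(_ <= (deg e u).+1)%N](leq_exp2r _ _ (isT : 0 < 2)).
  apply/andP; split; lia.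
- by move/eqP: Ea; rewrite muln_eq0 => /orP[//|/eqP].
- by move/eqP: Eb; rewrite muln_eq0 => /orP[//|/eqP].
- by apply/eqP; rewrite -(eqn_pmul2l (isT : 0 < Ka)); apply/eqP.
- lia.
Qed.
End L1.

End S.

Theorem claim1 (n : nat) (e : rel 'I_n) :
  simple_graph e ->
  (forall h : rel 'I_n, simple_graph h -> cM2 h <= cM2 e) ->
  forall u v : 'I_n, u != v -> inX e u -> inX e v -> ~~ e u v ->
  deg e u = deg e v /\
  (forall w : 'I_n, inX e w -> w != u -> w != v -> deg e w != deg e u).
Proof.
move=> Hsg Hmax u v uv Xu Xv nuv.
have [Hd Eu Ev Iu HcM] := L1 Hsg Hmax uv Xu Xv nuv.
split => // w Xw wu wv; apply/negP => /eqP Hw.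
have [Hs Hi] := Hsg.
have nuw : ~~ e u w.
  apply/negP => euw.
  have : 0 < eqF e u by apply/card_gt0P; exists w; rewrite inE euw Hw eqxx.
  by rewrite Eu.
have nvw : ~~ e v w.
  apply/negP => evw.
  have : 0 < eqF e v by apply/card_gt0P; exists w; rewrite inE evw Hw Hd eqxx.
  by rewrite Ev.
have dw : deg (addE e u v) w = deg e w by apply: dAo.
have Hmax' : forall h : rel 'I_n, simple_graph h -> cM2 h <= cM2 (addE e u v).
  by move=> h Hh; rewrite HcM; apply: Hmax.
have Ew y : addE e u v w y = e w y by rewrite /addE (negbTE wu) (negbTE wv) /= !orbF.
have Nw y : e w y -> (y != u) && (y != v).
  move=> ewy; apply/andP; split; apply/negP => /eqP Ey; subst y.
    by rewrite Hs ewy in nuw.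
  by rewrite Hs ewy in nvw.
have Xw' : inX (addE e u v) w.
  rewrite /inX.
  have -> : indegF (addE e u v) w = indegF e w.
    apply: eq_card => y; rewrite !inE Ew.
    case Ewy: (e w y) => //=; case/andP: (Nw y Ewy) => yu yv.
    by rewrite dw dAo.
  have -> : outdegF (addE e u v) w = outdegF e w.
    apply: eq_card => y; rewrite !inE Ew.
    case Ewy: (e w y) => //=; case/andP: (Nw y Ewy) => yu yv.
    by rewrite dw dAo.
  exact: Xw.
have Eu' y : addE e u v u y = e u y || (y == v) by rewrite /addE eqxx (negbTE uv) /= orbF.
have Xu' : inX (addE e u v) u.
  rewrite /inX.
  apply: (@leq_trans (indegF e u)).
    apply: subset_leq_card; apply/subsetP => y; rewrite !inE Eu'.
    case/andP => /orP[euy|/eqP->].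
      have yu : y != u by apply/negP => /eqP Ey; subst y; rewrite Hi in euy.
      have yv : y != v by apply/negP => /eqP Ey; subst y; rewrite euy in nuv.
      by rewrite dAu // dAo // euy /=; move/ltnW.
    by rewrite dAu // dAv // Hd ltnn.
  rewrite Iu.
  apply: subset_leq_card; apply/subsetP => y; rewrite !inE Eu'.
  case/andP => euy lt.
  have yu : y != u by apply/negP => /eqP Ey; subst y; rewrite Hi in euy.
  have yv : y != v by apply/negP => /eqP Ey; subst y; rewrite euy in nuv.
  by rewrite euy dAu // dAo // /= ltnS ltnW.
have uw : u != w by rewrite eq_sym.
have nuw' : ~~ addE e u v u w by rewrite Eu' (negbTE nuw) wv.
have [Hd' _ _ _ _] := L1 (addE_simple Hs Hi uv) Hmax' uw Xu' Xw' nuw'.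
move: Hd'; rewrite dAu // dw Hw => H; by move: (ltnSn (deg e u)); rewrite {2}H ltnn.
Qed.
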